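(* Let $-1\le a<1/4$ and $m\ge0$ an integer. For $\theta\in(2\pi/3,\pi)$ define \[ \zeta(\theta)=\frac{(2a-1)\cos\theta+\sqrt{(1-4a)\cos^2\theta+a}}{1-4a\cos^2\theta},\qquad g_m(\theta)=\frac{(\zeta(\theta)-\cos\theta)\sin((m+1)\theta)}{\sin\theta}-\cos((m+1)\theta)+\frac{1}{\zeta(\theta)^{m+1}}. \] Then the sign of $\lim_{\theta\to\pi^-}g_m(\theta)$ is $(-1)^m$. *)

(* Defs.v *)
From Stdlib Require Import Reals.
From Coquelicot Require Import Coquelicot.
Open Scope R_scope.

Definition zeta (a th : R) : R :=
  ((2 * a - 1) * cos th + sqrt ((1 - 4 * a) * (cos th) ^ 2 + a))
  / (1 - 4 * a * (cos th) ^ 2).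

Definition g (a : R) (m : nat) (th : R) : R :=
  (zeta a th - cos th) * sin (INR (S m) * th) / sin th
  - cos (INR (S m) * th) + 1 / (zeta a th) ^ (S m).

(* Main.v *)
Require Import Defs.
From Stdlib Require Import Reals Lra.
From Coquelicot Require Import Coquelicot.
Open Scope R_scope.

Fixpoint U (n : nat) (x : R) : R :=
  match n with
  | O => 1
  | S p => match p with O => 2 * x | S q => 2 * x * U p x - U q x end
  end.

Lemma U_sin (t : R) : forall n, sin (INR (S n) * t) = sin t * U n (cos t).
Proof.
  assert (H : forall n, sin (INR (S n) * t) = sin t * U n (cos t) /\
     sin (INR (S (S n)) * t) = sin t * U (S n) (cos t)).
  { intro n. induction n as [|n [IH1 IH2]].
    - split; simpl U.
      + replace (INR 1 * t) with t by (simpl; ring). ring.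
      + replace (INR 2 * t) with (2 * t) by (simpl; ring). rewrite sin_2a. ring.
    - split; [exact IH2|].
      change (U (S (S n)) (cos t)) with (2 * cos t * U (S n) (cos t) - U n (cos t)).
      replace (INR (S (S (S n))) * t) with (INR (S (S n)) * t + t)
        by (rewrite (S_INR (S (S n))); ring).
      assert (E : INR (S n) * t = INR (S (S n)) * t - t)
        by (rewrite (S_INR (S n)); ring).
      rewrite E, sin_minus in IH1. rewrite sin_plus.
      transitivity (2 * cos t * sin (INR (S (S n)) * t) -
        (sin (INR (S (S n)) * t) * cos t - cos (INR (S (S n)) * t) * sin t)).
      + ring.
      + rewrite IH1, IH2. ring. }
  intro n; apply H.
Qed.

Lemma U_cont : forall n x, continuous (U n) x.
Proof.
  intros n x.
  assert (H : forall k, continuous (U k) x /\ continuous (U (S k)) x).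
  { clear n. intro n. induction n as [|n [IH1 IH2]].
    - split; simpl U.
      + apply continuous_const.
      + apply (@ex_derive_continuous R_AbsRing R_NormedModule). auto_derive. auto.
    - split; [exact IH2|].
      change (continuous (fun y => 2 * y * U (S n) y - U n y) x).
      apply (continuous_plus (fun y => 2 * y * U (S n) y) (fun y => - U n y)).
      + apply (continuous_mult (fun y => 2 * y) (U (S n))); [|exact IH2].
        apply (@ex_derive_continuous R_AbsRing R_NormedModule). auto_derive. auto.
      + apply (continuous_opp (U n)). exact IH1. }
  apply H.
Qed.

Lemma U_m1 : forall n, U n (-1) = (-1) ^ n * INR (S n).
Proof.
  assert (H : forall n, U n (-1) = (-1) ^ n * INR (S n) /\
     U (S n) (-1) = (-1) ^ (S n) * INR (S (S n))).
  { intro n. induction n as [|n [IH1 IH2]].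
    - split; simpl; ring.
    - split; [exact IH2|].
      change (U (S (S n)) (-1)) with (2 * (-1) * U (S n) (-1) - U n (-1)).
      rewrite IH1, IH2. rewrite !S_INR. simpl pow. ring. }
  apply H.
Qed.

Lemma cos_SnPI : forall n, cos (INR (S n) * PI) = (-1) ^ (S n).
Proof.
  induction n as [|n IH].
  - simpl. replace (1 * PI) with PI by ring. rewrite cos_PI. ring.
  - replace (INR (S (S n)) * PI) with (INR (S n) * PI + PI)
      by (rewrite (S_INR (S n)); ring).
    rewrite neg_cos, IH. simpl. ring.
Qed.

Lemma pm1 : forall m, (-1) ^ m = 1 \/ (-1) ^ m = -1.
Proof.
  induction m as [|m [H|H]]; simpl; [left; ring| right; rewrite H; ring | left; rewrite H; ring].
Qed.

Theorem lemma2p10 (a : R) (m : nat) (ha1 : -1 <= a) (ha2 : a < 1 / 4) :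
  exists L : R,
    filterlim (g a m) (at_left PI) (locally L) /\ 0 < (-1) ^ m * L.
Proof.
  pose (F1 := fun t => zeta a t - cos t).
  pose (F2 := fun t => - cos (INR (S m) * t) + 1 / (zeta a t) ^ (S m)).
  pose (G := fun t => F1 t * U m (cos t) + F2 t).
  assert (Hs : 0 < (1 - 4 * a) * (cos PI) ^ 2 + a).
  { rewrite cos_PI. lra. }
  assert (Hd : 1 - 4 * a * (cos PI) ^ 2 <> 0).
  { rewrite cos_PI. lra. }
  pose (z := zeta a PI).
  assert (Hz : 1 <= z).
  { unfold z, zeta. rewrite cos_PI.
    replace ((-1) ^ 2) with 1 by ring.
    apply Rmult_le_reg_r with (1 - 4 * a * 1); [lra|].
    unfold Rdiv. rewrite (Rmult_assoc _ (/ (1 - 4 * a * 1))), (Rinv_l (1 - 4 * a * 1)); [|lra].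
    assert (-2 * a <= sqrt ((1 - 4 * a) * 1 + a)).
    { destruct (Rle_dec 0 a).
      - pose proof (sqrt_pos ((1 - 4 * a) * 1 + a)). lra.
      - rewrite <- (sqrt_square (-2 * a)); [|lra].
        apply sqrt_le_1_alt. nra. }
    lra. }
  assert (Hcont : continuous G PI).
  { unfold G.
    apply (continuous_plus (fun t => F1 t * U m (cos t)) F2).
    - apply (continuous_mult F1 (fun t => U m (cos t))).
      + unfold F1, zeta. apply (@ex_derive_continuous R_AbsRing R_NormedModule). auto_derive.
        split; [exact Hs|]. split; [exact Hd|]. auto.
      + apply (continuous_comp cos (U m)). apply continuous_cos. apply U_cont.
    - unfold F2.
      apply (continuous_plus (fun t => - cos (INR (S m) * t)) (fun t => 1 / zeta a t ^ S m)).
      + apply (@ex_derive_continuous R_AbsRing R_NormedModule). auto_derive. auto.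
      + apply (continuous_comp (zeta a) (fun x => 1 / x ^ S m)).
        * unfold zeta. apply (@ex_derive_continuous R_AbsRing R_NormedModule). auto_derive.
          split; [exact Hs|]. split; [exact Hd|]. auto.
        * fold z. assert (Hz0 : z ^ m <> 0) by (apply pow_nonzero; lra).
          apply (@ex_derive_continuous R_AbsRing R_NormedModule). auto_derive.
          apply Rmult_integral_contrapositive_currified; lra. }
  exists (G PI). split.
  - apply filterlim_ext_loc with G.
    + exists (mkposreal PI PI_RGT_0). intros y Hy Hlt.
      assert (Hy0 : 0 < y).
      { unfold ball in Hy; simpl in Hy; unfold AbsRing_ball, abs, minus, plus, opp in Hy; simpl in Hy.
        apply Rabs_def2 in Hy. simpl in Hy. lra. }
      assert (Hsin : sin y <> 0) by (apply Rgt_not_eq, sin_gt_0; lra).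
      unfold G, g, F1, F2. rewrite U_sin.
      assert (E : (zeta a y - cos y) * (sin y * U m (cos y)) / sin y = (zeta a y - cos y) * U m (cos y))
        by (field; exact Hsin).
      rewrite E. ring.
    + apply (filterlim_filter_le_1 (F := locally PI)).
      * intros P [d Hd']. exists d. intros y Hy _. apply Hd'. exact Hy.
      * exact Hcont.
  - unfold G, F1, F2. fold z. rewrite cos_PI, U_m1, cos_SnPI.
    assert (Hp : 0 < z ^ S m) by (apply pow_lt; lra).
    assert (Hp1 : 1 <= z ^ S m) by (apply pow_R1_Rle; lra).
    assert (Hi : 0 < 1 / z ^ S m <= 1).
    { split. apply Rdiv_lt_0_compat; lra.
      unfold Rdiv. rewrite Rmult_1_l. rewrite <- Rinv_1. apply Rinv_le_contravar; lra. }
    pose proof (pos_INR m).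
    revert Hi. generalize (1 / z ^ S m). intros w Hw.
    rewrite S_INR. simpl pow.
    destruct (pm1 m) as [E|E]; rewrite E; nra.
Qed.
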